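(* Let $B$ be a C*-algebra and $A$ a regular subalgebra of $B$. Then: (i) for every closed two-sided ideal $J$ of $B$, $J\cap A$ is normalizer-invariant; (ii) every normalizer-invariant closed two-sided ideal of $A$ is $B$-invariant; (iii) $A$ satisfies axiom (inv) relative to $B$.
   Context: $A\subseteq B$ is a closed *-subalgebra. A normalizer of $A$ in $B$ is an element $n\in B$ with $n^*An\subseteq A$ and $nAn^*\subseteq A$. $A$ is a regular subalgebra of $B$ if the normalizers span a dense subspace of $B$ and $A$ contains an approximate unit for $B$. A subset $S\subseteq A$ is normalizer-invariant if $nSn^*\subseteq S$ for every normalizer $n$. For $S\subseteq B$, $S$ is $B$-invariant if $[SB]=[BS]$, where $[\cdot]$ is closed linear span. $A$ satisfies axiom (inv) relative to $B$ if $J\cap A$ is $B$-invariant for every closed two-sided ideal $J$ of $B$. *)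

(* Defs.v *)
From mathcomp Require Import all_boot all_order all_algebra.
From mathcomp Require Import complex Rstruct.
Set Implicit Arguments. Unset Strict Implicit. Unset Printing Implicit Defensive.
Import Order.TTheory GRing.Theory Num.Theory.
Local Open Scope ring_scope.

Notation RR := Rdefinitions.R.
Notation CC := (RR[i]).

Section CstarDefs.
Variable V : lmodType CC.

Record cstar_algebra := CstarAlgebra {
  cmul : V -> V -> V;
  cstar : V -> V;
  cnorm : V -> RR;
  cmulA : forall x y z, cmul x (cmul y z) = cmul (cmul x y) z;
  cmulDl : forall x y z, cmul (x + y) z = cmul x z + cmul y z;
  cmulDr : forall x y z, cmul x (y + z) = cmul x y + cmul x z;
  cmulZl : forall (a : CC) x y, cmul (a *: x) y = a *: cmul x y;
  cmulZr : forall (a : CC) x y, cmul x (a *: y) = a *: cmul x y;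
  cstarK : forall x, cstar (cstar x) = x;
  cstarD : forall x y, cstar (x + y) = cstar x + cstar y;
  cstarZ : forall (a : CC) x, cstar (a *: x) = (conjc a) *: cstar x;
  cstarM : forall x y, cstar (cmul x y) = cmul (cstar y) (cstar x);
  cnorm_eq0 : forall x, cnorm x = 0 -> x = 0;
  cnormD : forall x y, cnorm (x + y) <= cnorm x + cnorm y;
  cnormZ : forall (a : CC) x, cnorm (a *: x) = Normc.normc a * cnorm x;
  cnormM : forall x y, cnorm (cmul x y) <= cnorm x * cnorm y;
  cnorm_cstar : forall x, cnorm (cmul (cstar x) x) = cnorm x ^+ 2;
  ccomplete : forall u : nat -> V,
    (forall e : RR, 0 < e -> exists N, forall m n, (N <= m)%N -> (N <= n)%N ->
        cnorm (u m - u n) < e) ->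
    exists l, forall e : RR, 0 < e -> exists N, forall n, (N <= n)%N ->
        cnorm (u n - l) < e
}.

Variable B : cstar_algebra.
Local Notation "x * y" := (cmul B x y) : ring_scope.
Local Notation "x ^*" := (cstar B x) : ring_scope.
Local Notation "`| x |" := (cnorm B x) : ring_scope.

Definition seq_cvg (u : nat -> V) (l : V) : Prop :=
  forall e : RR, 0 < e -> exists N, forall n, (N <= n)%N -> `|u n - l| < e.

Definition is_closed (S : V -> Prop) : Prop :=
  forall (u : nat -> V) (l : V), (forall n, S (u n)) -> seq_cvg u l -> S l.

Definition is_subspace (S : V -> Prop) : Prop :=
  S 0 /\ (forall x y, S x -> S y -> S (x + y)) /\
  (forall (a : CC) x, S x -> S (a *: x)).

Definition clspan (S : V -> Prop) : V -> Prop :=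
  fun v => forall T : V -> Prop, is_subspace T -> is_closed T ->
    (forall x, S x -> T x) -> T v.

Definition prodset (S T : V -> Prop) : V -> Prop :=
  fun v => exists s t, S s /\ T t /\ v = s * t.

Definition setB : V -> Prop := fun _ => True.

Definition closed_star_subalgebra (A : V -> Prop) : Prop :=
  is_subspace A /\ is_closed A /\
  (forall x y, A x -> A y -> A (x * y)) /\ (forall x, A x -> A (x ^*)).

Definition normalizer (A : V -> Prop) (n : V) : Prop :=
  (forall a, A a -> A (n ^* * a * n)) /\ (forall a, A a -> A (n * a * n ^*)).

Definition contains_approx_unit (A : V -> Prop) : Prop :=
  exists (I : Type) (le : I -> I -> Prop) (e : I -> V),
    (exists i : I, True) /\
    (forall i j k, le i j -> le j k -> le i k) /\
    (forall i j, exists k, le i k /\ le j k) /\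
    (forall i, A (e i)) /\
    (forall (b : V) (eps : RR), 0 < eps -> exists i0, forall i, le i0 i ->
        `|e i * b - b| < eps /\ `|b * e i - b| < eps).

Definition regular_subalgebra (A : V -> Prop) : Prop :=
  (forall b, clspan (normalizer A) b) /\ contains_approx_unit A.

Definition closed_ideal (J : V -> Prop) : Prop :=
  is_subspace J /\ is_closed J /\
  (forall x j, J j -> J (x * j)) /\ (forall x j, J j -> J (j * x)).

Definition closed_ideal_of (A I : V -> Prop) : Prop :=
  (forall x, I x -> A x) /\ is_subspace I /\ is_closed I /\
  (forall a i, A a -> I i -> I (a * i)) /\ (forall a i, A a -> I i -> I (i * a)).

Definition normalizer_invariant (A S : V -> Prop) : Prop :=
  forall n, normalizer A n -> forall s, S s -> S (n * s * n ^*).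

Definition B_invariant (S : V -> Prop) : Prop :=
  forall v, clspan (prodset S setB) v <-> clspan (prodset setB S) v.

Definition axiom_inv (A : V -> Prop) : Prop :=
  forall J, closed_ideal J -> B_invariant (fun x => J x /\ A x).

End CstarDefs.

(* Main.v *)
Require Import Defs.
From HB Require Import structures.
From mathcomp Require Import all_boot all_order all_algebra.
From mathcomp Require Import complex Rstruct.
From mathcomp Require Import ring lra zify.
Set Implicit Arguments. Unset Strict Implicit. Unset Printing Implicit Defensive.
Import Order.TTheory GRing.Theory Num.Theory.
Local Open Scope ring_scope.

Section Basic.
Variable V : lmodType CC.
Variable B : cstar_algebra V.
Local Notation "x ** y" := (cmul B x y) (at level 40, left associativity).
Local Notation "x ^†" := (cstar B x) (at level 2, format "x ^†").
Local Notation nm := (cnorm B).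

Lemma cmul0l y : 0 ** y = 0.
Proof. by apply: (@addrI _ (0 ** y)); rewrite -cmulDl !addr0. Qed.
Lemma cmul0r y : y ** 0 = 0.
Proof. by apply: (@addrI _ (y ** 0)); rewrite -cmulDr !addr0. Qed.
Lemma cmulNl x y : (- x) ** y = - (x ** y).
Proof. by apply/eqP; rewrite -addr_eq0 -cmulDl addNr cmul0l. Qed.
Lemma cmulNr x y : x ** (- y) = - (x ** y).
Proof. by apply/eqP; rewrite -addr_eq0 -cmulDr addNr cmul0r. Qed.
Lemma cmulBl x y z : (x - y) ** z = x ** z - y ** z.
Proof. by rewrite cmulDl cmulNl. Qed.
Lemma cmulBr x y z : z ** (x - y) = z ** x - z ** y.
Proof. by rewrite cmulDr cmulNr. Qed.
Lemma cstar0 : (0 : V)^† = 0.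
Proof. by apply: (@addrI _ (cstar B 0)); rewrite -cstarD !addr0. Qed.
Lemma cstarN x : (- x)^† = - (x^†).
Proof. by apply/eqP; rewrite -addr_eq0 -cstarD addNr cstar0. Qed.
Lemma cstarB x y : (x - y)^† = x^† - y^†.
Proof. by rewrite cstarD cstarN. Qed.

Lemma normcR (r : RR) : Normc.normc ((r%:C)%C) = `|r|.
Proof. by rewrite /Normc.normc /= expr0n /= addr0 sqrtr_sqr. Qed.

Lemma cnorm0 : nm 0 = 0.
Proof. by rewrite -(scale0r (0:V)) cnormZ Normc.normc0 mul0r. Qed.
Lemma cnormN x : nm (- x) = nm x.
Proof.
rewrite -scaleN1r cnormZ.
have -> : Normc.normc (-1 : CC) = 1.
  by rewrite /Normc.normc /= oppr0 expr0n addr0 sqrrN expr1n sqrtr1.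
by rewrite mul1r.
Qed.
Lemma cnorm_ge0 x : 0 <= nm x.
Proof.
have := cnormD B x (- x); rewrite subrr cnorm0 cnormN => H. lra.
Qed.
Lemma cnormB x y : nm (x - y) = nm (y - x).
Proof. by rewrite -cnormN opprB. Qed.
Lemma cnormZR (r : RR) x : nm ((r%:C)%C *: x) = `|r| * nm x.
Proof. by rewrite cnormZ normcR. Qed.

Lemma cnorm_star x : nm (x^†) = nm x.
Proof.
have key : forall y, nm y <= nm (y^†).
  move=> y; have := cnorm_cstar B y; have := cnormM B (y^†) y.
  have := cnorm_ge0 y; have := cnorm_ge0 (y^†).
  move=> h1 h2 h3 h4; rewrite h4 expr2 in h3.
  have [->|yp] := eqVneq (nm y) 0; first by [].
  have yp' : 0 < nm y by rewrite lt_def yp h2.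
  by rewrite -(ler_pM2r yp').
have h1 := key x; have h2 := key (x^†); rewrite cstarK in h2.
apply/eqP; by rewrite eq_le h1 h2.
Qed.

Lemma cnorm_cstar' x : nm (x ** x^†) = nm x ^+ 2.
Proof. by have := cnorm_cstar B (x^†); rewrite cstarK cnorm_star. Qed.

End Basic.

Section Lim.
Variable V : lmodType CC.
Variable B : cstar_algebra V.
Local Notation "x ** y" := (cmul B x y) (at level 40, left associativity).
Local Notation "x ^†" := (cstar B x) (at level 2, format "x ^†").
Local Notation nm := (cnorm B).

Lemma cvg_lip (u f : nat -> V) l L (K : RR) : 0 <= K ->
  (forall n, nm (f n - L) <= K * nm (u n - l)) -> seq_cvg B u l -> seq_cvg B f L.
Proof.
move=> K0 Hf Hu e e0.
have e'0 : 0 < e / (K + 1) by apply: divr_gt0 => //; lra.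
have [N HN] := Hu _ e'0; exists N => n /HN Hn.
apply: (le_lt_trans (Hf n)).
have K1 : 0 < K + 1 by lra.
have : K * nm (u n - l) <= K * (e / (K + 1)) by apply: ler_wpM2l => //; exact: ltW.
suff : K * (e / (K + 1)) < e by lra.
by rewrite mulrA ltr_pdivrMr // mulrDr mulr1; lra.
Qed.

Lemma small_eq0 (x : RR) : 0 <= x -> (forall e, 0 < e -> x < e) -> x = 0.
Proof.
move=> x0 H; apply/eqP; rewrite eq_le x0 andbT; rewrite leNgt; apply/negP => xp.
by have := H _ xp; rewrite ltxx.
Qed.

Lemma cvg_unique (u : nat -> V) l1 l2 : seq_cvg B u l1 -> seq_cvg B u l2 -> l1 = l2.
Proof.
move=> H1 H2; apply/subr0_eq; apply: (@cnorm_eq0 _ B).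
apply: small_eq0; first exact: cnorm_ge0.
move=> e e0; have e2 : 0 < e / 2 by apply: divr_gt0 => //; lra.
have [N1 HN1] := H1 _ e2; have [N2 HN2] := H2 _ e2.
have := HN1 (maxn N1 N2) (leq_maxl _ _); have := HN2 (maxn N1 N2) (leq_maxr _ _).
set w := u _ => a b.
have := cnormD B (w - l2) (l1 - w).
have -> : w - l2 + (l1 - w) = l1 - l2 by rewrite addrC addrA subrK.
rewrite [nm (l1 - w)]cnormB.
lra.
Qed.

Lemma cvg_shift (u : nat -> V) l : seq_cvg B u l -> seq_cvg B (fun n => u n.+1) l.
Proof. by move=> H e /H [N HN]; exists N => n Hn; apply: HN; apply: leqW. Qed.

Lemma cvg_ext (u v : nat -> V) l : (forall n, u n = v n) -> seq_cvg B u l -> seq_cvg B v l.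
Proof. by move=> E H e /H [N HN]; exists N => n /HN; rewrite E. Qed.

Lemma cvg_star (u : nat -> V) l : seq_cvg B u l -> seq_cvg B (fun n => (u n)^†) (l^†).
Proof.
apply: (@cvg_lip u _ l _ 1) => // n.
by rewrite mul1r -cstarB cnorm_star.
Qed.

Lemma cvg_mull (u : nat -> V) l a : seq_cvg B u l -> seq_cvg B (fun n => a ** u n) (a ** l).
Proof.
apply: (@cvg_lip u _ l _ (nm a)); first exact: cnorm_ge0.
by move=> n; rewrite -cmulBr; apply: cnormM.
Qed.

Lemma cvg_mulr (u : nat -> V) l a : seq_cvg B u l -> seq_cvg B (fun n => u n ** a) (l ** a).
Proof.
apply: (@cvg_lip u _ l _ (nm a)); first exact: cnorm_ge0.
by move=> n; rewrite -cmulBl mulrC; apply: cnormM.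
Qed.

End Lim.

Fixpoint rho (k : nat) : RR := match k with 0 => 0 | k.+1 => 2^-1 * (1 + rho k ^+ 2) end.

Lemma rho_bnd k : 0 <= rho k <= 1.
Proof.
elim: k => [|k /andP [h0 h1]] /=; first by rewrite lexx ler01.
apply/andP; split.
  by apply: mulr_ge0; [rewrite invr_ge0; lra | nra].
have : rho k ^+ 2 <= 1 by rewrite expr2; nra.
move=> h; rewrite -[1 in X in _ <= X](@divff _ 2) ?pnatr_eq0 // mulrC.
rewrite ler_pdivlMr ?ltr0n // ; lra.
Qed.

Lemma rho_incr k : rho k <= rho k.+1.
Proof.
rewrite /=; have /andP [h0 h1] := rho_bnd k.
rewrite mulrC ler_pdivlMr ?ltr0n //; nra.
Qed.

Lemma rho_le m n : (n <= m)%N -> rho n <= rho m.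
Proof.
elim: m => [|m IH]; first by rewrite leqn0 => /eqP ->.
rewrite leq_eqVlt => /orP [/eqP -> //| ]; rewrite ltnS => /IH h.
exact: (le_trans h (rho_incr m)).
Qed.

Lemma rho_S k : rho k.+1 = 2^-1 * (1 + rho k ^+ 2).
Proof. by []. Qed.

Lemma rho_rate n : (1 - rho n) * (n%:R + 2) <= 2.
Proof.
elim: n => [|n IH]; first by rewrite subr0 add0r mul1r.
rewrite rho_S.
have /andP [h0 h1] := rho_bnd n.
set e := 1 - rho n in IH.
have -> : 1 - 2^-1 * (1 + rho n ^+ 2) = e - e^+2 / 2.
  by rewrite /e; field.
have hn : 0 <= (n%:R : RR) by rewrite ler0n.
have he0 : 0 <= e by rewrite /e; lra.
have he1 : e <= 1 by rewrite /e; lra.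
set N := (n%:R : RR) + 2 in IH.
have -> : (n.+1%:R : RR) + 2 = N + 1 by rewrite /N -natr1; ring.
have hN : 2 <= N by rewrite /N; lra.
have k1 : 0 <= (2 - e * N) * ((N + 1) * (N - 2)) by apply: mulr_ge0; nra.
have k2 : 0 <= (N + 1) * (2 - e * N) ^+ 2 by apply: mulr_ge0; [lra | exact: sqr_ge0].
have H : 0 <= N ^+ 2 * (2 - (e - e ^+ 2 / 2) * (N + 1)).
  have -> : N ^+ 2 * (2 - (e - e ^+ 2 / 2) * (N + 1)) =
    (4 + (2 - e * N) * ((N + 1) * (N - 2)) * 2 + (N + 1) * (2 - e * N) ^+ 2) / 2.
    by field.
  apply: divr_ge0; lra.
have N2 : 0 < N ^+ 2 by apply: exprn_gt0; lra.
rewrite pmulr_rge0 // in H; lra.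
Qed.

Section Sqrt.
Variable V : lmodType CC.
Variable B : cstar_algebra V.
Local Notation "x ** y" := (cmul B x y) (at level 40, left associativity).
Local Notation "x ^†" := (cstar B x) (at level 2, format "x ^†").
Local Notation nm := (cnorm B).

Definition half : CC := ((2^-1 : RR)%:C)%C.

Fixpoint sq_it (a : V) (k : nat) : V :=
  match k with 0 => 0 | k.+1 => half *: (a + sq_it a k ** sq_it a k) end.

Lemma nm_half v : nm (half *: v) = 2^-1 * nm v.
Proof. rewrite /half cnormZR ger0_norm // invr_ge0; lra. Qed.

Variable a : V.
Hypothesis a_sa : a^† = a.
Hypothesis a_nm : nm a <= 1.

Lemma sq_it_comm c : c ** a = a ** c -> forall k, c ** sq_it a k = sq_it a k ** c.
Proof.
move=> hc; elim=> [|k IH] /=; first by rewrite cmul0l cmul0r.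
rewrite cmulZr cmulZl cmulDr cmulDl hc; congr (_ *: (_ + _)).
by rewrite cmulA IH -cmulA IH cmulA.
Qed.

Lemma sq_it_comm2 j k : sq_it a j ** sq_it a k = sq_it a k ** sq_it a j.
Proof.
apply: sq_it_comm; symmetry; apply: sq_it_comm => //.
Qed.

Lemma sq_it_sa k : (sq_it a k)^† = sq_it a k.
Proof.
elim: k => [|k IH] /=; first exact: cstar0.
rewrite cstarZ cstarD cstarM IH a_sa /half conjc_real //.
Qed.

Lemma sq_it_bnd k : nm (sq_it a k) <= rho k.
Proof.
elim: k => [|k IH] /=; first by rewrite cnorm0.
rewrite nm_half; apply: ler_wpM2l; first by rewrite invr_ge0; lra.
apply: (le_trans (cnormD B _ _)); apply: lerD => //.
apply: (le_trans (cnormM B _ _)); rewrite expr2.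
have h0 := cnorm_ge0 B (sq_it a k).
by apply: ler_pM.
Qed.

Lemma sq_it_step k : nm (sq_it a k.+1 - sq_it a k) <= rho k.+1 - rho k.
Proof.
elim: k => [|k IH].
  rewrite /= subr0 cmul0l addr0 nm_half expr0n /= addr0 subr0 mulr1.
  apply: (@le_trans _ _ (2^-1 * 1)); last by rewrite mulr1.
  apply: ler_wpM2l => //; rewrite invr_ge0; lra.
set x := sq_it a k.+1; set y := sq_it a k.
have E : sq_it a k.+2 - x = half *: ((x - y) ** (x + y)).
  rewrite [sq_it a k.+2]/= -/x [x in _ - x]/= -/y.
  rewrite -scalerBr; congr (_ *: _).
  rewrite cmulDr !cmulBl [y ** x]sq_it_comm2.
  rewrite -/x -/y; set p := x ** x; set q := y ** y; set t := x ** y.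
  by rewrite opprD addrACA subrr add0r addrA subrK.
rewrite E nm_half.
have hxy : nm (x + y) <= rho k.+1 + rho k.
  apply: (le_trans (cnormD B _ _)); apply: lerD; [exact: sq_it_bnd | exact: sq_it_bnd].
have h1 := cnormM B (x - y) (x + y).
have h2 := cnorm_ge0 B (x - y).
have h3 := cnorm_ge0 B (x + y).
have h4 : nm (x - y) * nm (x + y) <= (rho k.+1 - rho k) * (rho k.+1 + rho k).
  by apply: ler_pM.
have -> : rho k.+2 - rho k.+1 = 2^-1 * ((rho k.+1 - rho k) * (rho k.+1 + rho k)).
  rewrite (rho_S k.+1); set w := rho k.+1.  rewrite /w rho_S.  by field.
apply: ler_wpM2l; first by rewrite invr_ge0; lra.
exact: le_trans h1 h4.
Qed.

Lemma sq_it_cauchy n m : (n <= m)%N -> nm (sq_it a m - sq_it a n) <= rho m - rho n.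
Proof.
elim: m => [|m IH]; first by rewrite leqn0 => /eqP ->; rewrite !subrr cnorm0.
rewrite leq_eqVlt => /orP [/eqP -> |]; first by rewrite !subrr cnorm0.
rewrite ltnS => /IH h.
have -> : sq_it a m.+1 - sq_it a n = (sq_it a m.+1 - sq_it a m) + (sq_it a m - sq_it a n).
  by rewrite addrA subrK.
apply: (le_trans (cnormD B _ _)).
have := sq_it_step m; lra.
Qed.


Lemma half_half (v : V) : half *: v + half *: v = v.
Proof.
rewrite -scalerDl /half -rmorphD /=.
have -> : (2^-1 + 2^-1 : RR) = 1 by field.
by rewrite scale1r.
Qed.

Lemma sqrt_exists : exists r, r^† = r /\ (forall c, c ** a = a ** c -> c ** r = r ** c) /\ r + r = a + r ** r.
Proof.
have cauchy : forall e : RR, 0 < e -> exists N, forall m n, (N <= m)%N -> (N <= n)%N ->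
    nm (sq_it a m - sq_it a n) < e.
  move=> e e0.
  have b0 : 0 <= 2 / e by apply: divr_ge0; [lra | exact: ltW].
  have hb := archi_boundP b0.
  set N := Num.bound (2 / e) in hb.
  have key : forall m n, (N <= n)%N -> (n <= m)%N -> nm (sq_it a m - sq_it a n) < e.
    move=> m n hn hnm.
    have h1 := sq_it_cauchy hnm.
    have h2 := rho_rate n.
    have /andP [_ h3] := rho_bnd m.
    have hN : (N%:R : RR) <= n%:R by rewrite ler_nat.
    have hn0 : 0 <= (n%:R : RR) by rewrite ler0n.
    have : 2 < e * (n%:R + 2).
      rewrite ltr_pdivrMr // in hb; nra.
    move=> h4.
    have h5 : (1 - rho n) * (n%:R + 2) < e * (n%:R + 2) by lra.
    rewrite ltr_pM2r in h5; last lra.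
    lra.
  exists N => m n hm hn.
  case: (leqP n m) => hnm; first exact: key.
  rewrite cnormB; apply: key => //; exact: ltnW.
have [l hl] := ccomplete cauchy.
have cvl : seq_cvg B (sq_it a) l by exact: hl.
exists l; split; [|split].
- apply: (cvg_unique (B := B) (u := sq_it a)) => //.
  apply: (cvg_ext (B := B) (u := fun n => (sq_it a n)^†)); first by move=> n; rewrite sq_it_sa.
  exact: cvg_star.
- move=> c hc; apply: (cvg_unique (B := B) (u := fun n => c ** sq_it a n)).
    exact: cvg_mull.
  apply: (cvg_ext (B := B) (u := fun n => sq_it a n ** c)); first by move=> n; rewrite sq_it_comm.
  exact: cvg_mulr.
- have e1 : l = half *: (a + l ** l).
    apply: (cvg_unique (B := B) (u := fun n => sq_it a n.+1)); first exact: cvg_shift.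
    apply: (@cvg_lip _ B (sq_it a) _ l _ (2^-1 * (1 + nm l))) => //.
      apply: mulr_ge0; first by rewrite invr_ge0; lra.
      have := cnorm_ge0 B l; lra.
    move=> n /=; rewrite -scalerBr nm_half.
    rewrite -mulrA; apply: ler_wpM2l; first by rewrite invr_ge0; lra.
    have -> : a + sq_it a n ** sq_it a n - (a + l ** l) =
      sq_it a n ** (sq_it a n - l) + (sq_it a n - l) ** l.
      by rewrite cmulBr cmulBl addrA subrK opprD addrACA subrr add0r.
    apply: (le_trans (cnormD B _ _)).
    have g1 := cnormM B (sq_it a n) (sq_it a n - l).
    have g2 := cnormM B (sq_it a n - l) l.
    have g3 := sq_it_bnd n.
    have /andP [_ g4] := rho_bnd n.
    have g5 := cnorm_ge0 B (sq_it a n - l).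
    have g6 := cnorm_ge0 B l.
    have g7 := cnorm_ge0 B (sq_it a n).
    have g8 : nm (sq_it a n) * nm (sq_it a n - l) <= nm (sq_it a n - l).
      have : nm (sq_it a n) <= 1 by lra.
      nra.
    nra.
  by rewrite {1 2}e1 half_half.
Qed.

End Sqrt.

Definition Ux (V : lmodType CC) (B : cstar_algebra V) : Type := (CC * V)%type.

Section Unit.
Variable V : lmodType CC.
Variable B : cstar_algebra V.
Local Notation "x ** y" := (cmul B x y) (at level 40, left associativity).
Local Notation "x ^†" := (cstar B x) (at level 2, format "x ^†").
Local Notation nm := (cnorm B).
Local Notation U := (Ux B).

HB.instance Definition _ := GRing.Zmodule.on U.

Definition umul (p q : U) : U :=
  (p.1 * q.1, p.1 *: q.2 + q.1 *: p.2 + p.2 ** q.2).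
Definition uone : U := (1, 0).

Lemma umulA : associative umul.
Proof.
move=> [a x] [b y] [c z]; rewrite /umul /=; congr pair; first by rewrite mulrA.
rewrite !scalerDr !cmulDl !cmulDr !cmulZl !cmulZr !scalerA cmulA.
rewrite [c * a]mulrC [c * b]mulrC.
rewrite -!addrA; congr (_ + _); congr (_ + _).
rewrite (addrCA (a *: (y ** z))); congr (_ + _).
rewrite (addrCA (c *: (x ** y))); congr (_ + _).
by rewrite addrCA.
Qed.

Lemma umul1l : left_id uone umul.
Proof. by move=> [b y]; rewrite /umul /= mul1r scale1r scaler0 cmul0l !addr0. Qed.
Lemma umul1r : right_id uone umul.
Proof. by move=> [b y]; rewrite /umul /= mulr1 scale1r scaler0 cmul0r add0r addr0. Qed.
Lemma umulDl : left_distributive umul +%R.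
Proof.
move=> [a x] [b y] [c z]; rewrite /umul /=; congr pair; first by rewrite mulrDl.
rewrite !scalerDl !scalerDr cmulDl.
rewrite -!addrA; congr (_ + _); rewrite addrCA; congr (_ + _).
by rewrite /= (addrCA (x ** z)) (addrCA (x ** z)).
Qed.
Lemma umulDr : right_distributive umul +%R.
Proof.
move=> [a x] [b y] [c z]; rewrite /umul /=; congr pair; first by rewrite mulrDr.
rewrite !scalerDl !scalerDr cmulDr.
rewrite -!addrA; congr (_ + _); rewrite addrCA; congr (_ + _).
by rewrite /= (addrCA (x ** y)) (addrCA (x ** y)).
Qed.
Lemma uone_neq0 : uone != 0.
Proof. by apply/eqP => -[] /eqP; rewrite oner_eq0. Qed.

HB.instance Definition _ := GRing.Zmodule_isNzRing.Build U umulA umul1l umul1r umulDl umulDr uone_neq0.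

End Unit.

Section ULemmas.
Variable V : lmodType CC.
Variable B : cstar_algebra V.
Local Notation "x ** y" := (cmul B x y) (at level 40, left associativity).
Local Notation "x ^†" := (cstar B x) (at level 2, format "x ^†").
Local Notation nm := (cnorm B).
Local Notation U := (Ux B).

Definition emb (x : V) : U := (0, x).
Definition sc (c : CC) : U := (c, 0).
Definition dag (p : U) : U := ((p.1)^*%C, (p.2)^†).
Definition rp (y : V) (w : U) : V := (emb y * w).2.

Lemma mulUE (p q : U) : p * q = (p.1 * q.1, p.1 *: q.2 + q.1 *: p.2 + p.2 ** q.2).
Proof. by []. Qed.
Lemma oneUE : (1 : U) = (1, 0).
Proof. by []. Qed.

Lemma embD x y : emb (x + y) = emb x + emb y.
Proof. by rewrite /emb; congr pair; rewrite addr0. Qed.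
Lemma emb0 : emb 0 = 0.
Proof. by []. Qed.
Lemma embN x : emb (- x) = - emb x.
Proof. by rewrite /emb; congr pair; rewrite oppr0. Qed.
Lemma embB x y : emb (x - y) = emb x - emb y.
Proof. by rewrite embD embN. Qed.
Lemma embM x y : emb x * emb y = emb (x ** y).
Proof. by rewrite mulUE /emb /= mulr0 !scale0r !add0r. Qed.
Lemma emb_inj : injective emb.
Proof. by move=> x y []. Qed.
Lemma embMl y (w : U) : emb y * w = emb (rp y w).
Proof. by rewrite /rp mulUE /emb /= mul0r. Qed.
Lemma rpE y (w : U) : rp y w = w.1 *: y + y ** w.2.
Proof. by rewrite /rp mulUE /emb /= scale0r add0r. Qed.
Lemma rpD y (v w : U) : rp y (v + w) = rp y v + rp y w.
Proof. by rewrite /rp mulrDr. Qed.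
Lemma rpMn y (w : U) n : rp y (w *+ n) = rp y w *+ n.
Proof. by elim: n => [|n IH]; rewrite ?mulr0n ?mulrS ?rpD ?IH //= /rp mulr0. Qed.
Lemma rpN y (w : U) : rp y (- w) = - rp y w.
Proof. by rewrite /rp mulrN. Qed.
Lemma rpMz y (w : U) k : rp y (w *~ k) = rp y w *~ k.
Proof. by case: k => n; rewrite ?NegzE /= ?rpN rpMn. Qed.
Lemma rpM y (v w : U) : rp y (v * w) = rp (rp y v) w.
Proof. by apply: emb_inj; rewrite -!embMl mulrA. Qed.
Lemma rp_emb y x : rp y (emb x) = y ** x.
Proof. by apply: emb_inj; rewrite -embMl embM. Qed.
Lemma rp1 y : rp y 1 = y.
Proof. by rewrite /rp mulr1. Qed.

Lemma scM (c : CC) (p : U) : sc c * p = (c * p.1, c *: p.2).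
Proof. by rewrite mulUE /sc /= scaler0 cmul0l !addr0. Qed.
Lemma sc_central (c : CC) (p : U) : sc c * p = p * sc c.
Proof.
rewrite scM mulUE /sc /= scaler0 cmul0r add0r addr0; congr pair; exact: mulrC.
Qed.
Lemma scMsc (c d : CC) : sc c * sc d = sc (c * d).
Proof. by rewrite scM /sc /= scaler0. Qed.
Lemma scD (c d : CC) : sc (c + d) = sc c + sc d.
Proof. by rewrite /sc; congr pair; rewrite addr0. Qed.
Lemma scN (c : CC) : sc (- c) = - sc c.
Proof. by rewrite /sc; congr pair; rewrite oppr0. Qed.
Lemma sc1 : sc 1 = 1.
Proof. by []. Qed.

Lemma dagD p q : dag (p + q) = dag p + dag q.
Proof. by rewrite /dag /= rmorphD cstarD. Qed.
Lemma dagN p : dag (- p) = - dag p.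
Proof. by rewrite /dag /= rmorphN cstarN. Qed.
Lemma dagB p q : dag (p - q) = dag p - dag q.
Proof. by rewrite dagD dagN. Qed.
Lemma dagM p q : dag (p * q) = dag q * dag p.
Proof.
case: p q => [a x] [b y]; rewrite !mulUE /dag /=; congr pair.
  by rewrite rmorphM mulrC.
rewrite !cstarD !cstarZ cstarM; congr (_ + _); by rewrite addrC.
Qed.
Lemma dag1 : dag 1 = 1.
Proof. by rewrite /dag /= cstar0 oppr0. Qed.
Lemma dag_emb x : dag (emb x) = emb (x^†).
Proof. by rewrite /dag /emb /= oppr0. Qed.
Lemma dag_sc c : dag (sc c) = sc (c^*%C).
Proof. by rewrite /dag /sc /= cstar0. Qed.
Lemma dagX p n : dag (p ^+ n) = (dag p) ^+ n.
Proof.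
elim: n => [|n IH]; first by rewrite !expr0 dag1.
by rewrite exprS dagM IH -exprSr.
Qed.

Lemma rp_iso y (w : U) : w * dag w = 1 -> nm (rp y w) = nm y.
Proof.
move=> hw; set z := rp y w.
have E : z ** z^† = y ** y^†.
  apply: emb_inj; rewrite -!embM -!dag_emb /z -embMl dagM mulrA -(mulrA (emb y)) hw mulr1 //.
have h1 := cnorm_cstar' B z; have h2 := cnorm_cstar' B y.
rewrite E h2 in h1.
have g1 := cnorm_ge0 B z; have g2 := cnorm_ge0 B y.
apply/eqP; rewrite eq_le; apply/andP; split.
  by rewrite -(ler_pXn2r (n := 2)) ?nnegrE // h1.
by rewrite -(ler_pXn2r (n := 2)) ?nnegrE // h1.
Qed.

Lemma unitary_X (w : U) n : w * dag w = 1 -> w ^+ n * dag (w ^+ n) = 1.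
Proof.
move=> hw; elim: n => [|n IH]; first by rewrite expr0 dag1 mulr1.
by rewrite exprSr dagM mulrA -(mulrA (w ^+ n)) hw mulr1.
Qed.

Lemma cnormMz (v : V) k : nm (v *~ k) = `|k|%:~R * nm v.
Proof.
rewrite -scaler_int.
have -> : (k%:~R : CC) = ((k%:~R : RR)%:C)%C by rewrite rmorph_int.
by rewrite cnormZR intr_norm.
Qed.

Lemma cnorm_sum (I : Type) (r : seq I) (F : I -> V) :
  nm (\sum_(i <- r) F i) <= \sum_(i <- r) nm (F i).
Proof.
elim: r => [|i r IH]; first by rewrite !big_nil cnorm0.
rewrite !big_cons; apply: (le_trans (cnormD B _ _)); exact: lerD.
Qed.

Lemma rp_sum y n (c : nat -> int) (w : U) : w * dag w = 1 ->
  nm (rp y (\sum_(k < n) (w ^+ k) *~ c k)) <= (\sum_(k < n) `|c k|%:~R) * nm y.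
Proof.
move=> hw.
have -> : rp y (\sum_(k < n) (w ^+ k) *~ c k) = \sum_(k < n) rp y (w ^+ k) *~ c k.
  elim: n => [|n IH]; first by rewrite !big_ord0 /rp mulr0.
  by rewrite !big_ord_recr /= rpD IH rpMz.
rewrite big_distrl /=; apply: le_trans; first exact: cnorm_sum.
apply: ler_sum => k _; rewrite cnormMz rp_iso //; exact: unitary_X.
Qed.

End ULemmas.

Definition shf (f : nat -> int) (k : nat) : int := if k is k'.+1 then f k' else 0.

Fixpoint Dc (N k : nat) : int :=
  match N with
  | 0 => if (k <= 1)%N then 1 else 0
  | N'.+1 => shf (Dc N') k - Dc N' k
  end.

Lemma Dc_zero N k : (N.+2 <= k)%N -> Dc N k = 0.
Proof.
elim: N k => [|N IH] k hk /=; first by case: k hk => [|[|k]].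
case: k hk => [//|k] hk; rewrite /shf IH ?IH //; exact: ltnW.
Qed.

Lemma Dc_poly (R : nzRingType) (w : R) N :
  (w + 1) * (w - 1) ^+ N = \sum_(k < N.+2) w ^+ k *~ Dc N k.
Proof.
elim: N => [|N IH].
  by rewrite expr0 mulr1 !big_ord_recr big_ord0 /= add0r expr0 expr1 addrC.
rewrite exprSr mulrA IH mulrBr mulr1 big_distrl /=.
have -> : \sum_(k < N.+3) w ^+ k *~ Dc N.+1 k =
  \sum_(k < N.+3) w ^+ k *~ shf (Dc N) k -
  \sum_(k < N.+3) w ^+ k *~ Dc N k.
  by rewrite -sumrB; apply: eq_bigr => k _; rewrite /= mulrzBr.
congr (_ - _).
  rewrite [in RHS]big_ord_recl /= mulr0z add0r; apply: eq_bigr => k _.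
  by rewrite /bump /= add1n exprSr mulrzAl.
rewrite [in RHS]big_ord_recr /= Dc_zero // mulr0z addr0.
by apply: eq_bigr.
Qed.

Definition bp (N k : nat) : nat := if k is k'.+1 then 'C(N, k') else 0.

Lemma Dc_closed N k : Dc N k = (-1) ^+ (N + k) * ('C(N, k)%:Z - (bp N k)%:Z).
Proof.
elim: N k => [|N IH] k.
  case: k => [|[|k]] //=; by rewrite !bin0n /= subrr mulr0.
case: k => [|k].
  rewrite [Dc N.+1 0]/= /shf IH !addn0 /bp bin0 bin0 !subr0 !mulr1 exprS; ring.
rewrite [Dc N.+1 _]/= /shf !IH /bp.
have -> : 'C(N.+1, k) = ('C(N, k) + bp N k)%N.
  by case: k => [|k]; rewrite /bp ?bin0 ?addn0 // binS addnC.
rewrite binS !PoszD !addnS addSn !exprS; ring.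
Qed.

Lemma bin_up M k : (k < M)%N -> ('C(M.*2, k) <= 'C(M.*2, k.+1))%N.
Proof.
move=> hk; have E := mul_bin_left M.*2 k.
rewrite -(@leq_pmul2l k.+1) // E leq_mul2r; apply/orP; right; lia.
Qed.

Lemma bin_down M k : (M <= k)%N -> ('C(M.*2, k.+1) <= 'C(M.*2, k))%N.
Proof.
move=> hk; have E := mul_bin_left M.*2 k.
rewrite -(@leq_pmul2l k.+1) // E leq_mul2r; apply/orP; right; lia.
Qed.

Lemma bin_decr M j : ('C(M.*2, M + j) <= 'C(M.*2, M))%N.
Proof.
elim: j => [|j IH]; first by rewrite addn0.
by rewrite addnS; apply: leq_trans (bin_down (leq_addr j M)) IH.
Qed.

Lemma Dc_abs_sum M :
  (\sum_(k < (M.*2).+2) `|Dc M.*2 k|) = (2 * 'C(M.*2, M))%N%:Z.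
Proof.
set N := M.*2.
have habs : forall k, `|Dc N k| = `|'C(N, k)%:Z - (bp N k)%:Z|.
  by move=> k; rewrite Dc_closed normrM normrX normrN1 expr1n mul1r.
have S1 : forall n, (n <= M)%N ->
   \sum_(k < n.+1) `|Dc N k| = ('C(N, n))%:Z.
  elim=> [|n IH] hn.
    by rewrite big_ord_recr big_ord0 /= add0r habs /bp bin0 subr0.
  rewrite big_ord_recr /= IH ?(ltnW hn) // habs /bp.
  have hle := bin_up hn.
  rewrite ger0_norm; last by rewrite subr_ge0 lez_nat.
  by rewrite addrC subrK.
have S2 : forall j, (j <= M.+1)%N ->
   \sum_(k < (M + j).+1) `|Dc N k| = (2 * 'C(N, M) - 'C(N, M + j))%N%:Z.
  elim=> [|j IH] hj.
    rewrite addn0 S1 //; congr Posz; lia.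
  rewrite addnS big_ord_recr /= IH ?(ltnW hj) // habs /bp.
  have hle := bin_down (leq_addr j M : (M <= M + j)%N).
  rewrite ler0_norm; last by rewrite subr_le0 lez_nat.
  have h2 := bin_decr M j.
  rewrite -/N in hle h2; lia.
have := S2 M.+1 (leqnn _).
have -> : (M + M.+1).+1 = N.+2 by rewrite /N -addnn; lia.
move=> ->; rewrite (@bin_small N (M + M.+1)); last by rewrite /N -addnn; lia.
by rewrite subn0.
Qed.

Lemma central_bin M : ('C(M.*2, M) ^ 2 * M.+1 <= 16 ^ M)%N.
Proof.
elim: M => [|M IH]; first by [].
have E1 := mul_bin_diag (M.+1).*2 M.
have E2 := mul_bin_down (M.*2).+1 M.
rewrite doubleS /= in E1 E2 *.
set C := 'C(M.*2, M) in IH E2 *.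
set C1 := 'C((M.*2).+1, M) in E1 E2.
set C2 := 'C((M.*2).+2, M.+1) in E1 *.
have E2' : (M.+1 * C1 = (M.*2).+1 * C)%N.
  rewrite E2; congr (_ * _)%N; lia.
have F : (M.+1 * C2 = 2 * (M.*2.+1) * C)%N.
  apply/eqP; rewrite -(@eqn_pmul2l M.+1) //; apply/eqP.
  rewrite -E1 mulnCA E2'.
  have -> : (M.*2).+2 = (2 * M.+1)%N by lia.
  ring.
have key : ((M.+1 ^ 2) * (C2 ^ 2 * M.+2) <= (M.+1 ^ 2) * 16 ^ M.+1)%N.
  have -> : ((M.+1 ^ 2) * (C2 ^ 2 * M.+2) = (M.+1 * C2) ^ 2 * M.+2)%N.
    by rewrite expnMn mulnA.
  rewrite F.
  have h1 : ((M.*2.+1) ^ 2 * M.+2 <= 4 * M.+1 ^ 3)%N by rewrite -addnn; nia.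
  have : ((2 * (M.*2.+1) * C) ^ 2 * M.+2 = 4 * C ^ 2 * ((M.*2.+1) ^ 2 * M.+2))%N.
    by rewrite !expnMn; ring.
  move=> ->.
  apply: (@leq_trans (4 * C ^ 2 * (4 * M.+1 ^ 3))).
    by rewrite leq_mul2l h1 orbT.
  have -> : (4 * C ^ 2 * (4 * M.+1 ^ 3) = 16 * M.+1 ^ 2 * (C ^ 2 * M.+1))%N by ring.
  have -> : (M.+1 ^ 2 * 16 ^ M.+1 = 16 * M.+1 ^ 2 * 16 ^ M)%N by rewrite (expnS 16 M); ring.
  by rewrite leq_mul2l IH orbT.
by rewrite leq_pmul2l ?expn_gt0 in key.
Qed.

Lemma conj_i : (('i)^*)%C = - ('i%C : CC).
Proof. by apply/eqP; rewrite eq_complex /= oppr0 !eqxx. Qed.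
Lemma i_sq : ('i%C : CC) * 'i%C = -1.
Proof. by rewrite -expr2 sqr_i. Qed.

Lemma sq_helper (T : nzRingType) (R A : T) : R + R = A + R * R -> (1 - R) * (1 - R) = 1 - A.
Proof.
move=> E.
have -> : A = R + R - R * R by rewrite E addrK.
rewrite mulrBr mulr1 mulrBl mul1r.
rewrite !opprB !addrA.
by rewrite opprD !addrA [1 - R + _]addrAC.
Qed.

Fixpoint witer (V : lmodType CC) (B : cstar_algebra V) (x h : V) (m : nat) : V :=
  match m with 0 => x | m'.+1 => witer B x h m' - cmul B (cmul B (witer B x h m') h) h end.

Section Core.
Variable V : lmodType CC.
Variable B : cstar_algebra V.
Local Notation "x ** y" := (cmul B x y) (at level 40, left associativity).
Local Notation "x ^†" := (cstar B x) (at level 2, format "x ^†").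
Local Notation nm := (cnorm B).
Local Notation U := (Ux B).
Local Notation emb := (@emb V B).
Local Notation sc := (@sc V B).
Local Notation dag := (@dag V B).
Local Notation rp := (@rp V B).

Variable h : V.
Hypothesis h_sa : h^† = h.
Variable r : V.
Hypothesis r_sa : r^† = r.
Hypothesis r_c : h ** r = r ** h.
Hypothesis r_eq : r + r = h ** h + r ** r.

Let H : U := emb h.
Let S : U := 1 - emb r.
Let I : U := sc 'i%C.
Let u : U := H + I * S.
Let ud : U := H - I * S.

Lemma HS_comm : H * S = S * H.
Proof. by rewrite /H /S mulrBr mulrBl mulr1 mul1r !embM r_c. Qed.

Lemma I_comm (p : U) : I * p = p * I.
Proof. exact: sc_central. Qed.

Lemma II : I * I = -1.
Proof. by rewrite /I scMsc i_sq scN sc1. Qed.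

Lemma dagH : dag H = H.
Proof. by rewrite /H dag_emb h_sa. Qed.
Lemma dagS : dag S = S.
Proof. by rewrite /S dagB dag1 dag_emb r_sa. Qed.
Lemma dagI : dag I = - I.
Proof. by rewrite /I dag_sc conj_i scN. Qed.

Lemma SS : S * S = 1 - H * H.
Proof.
rewrite /S /H embM; apply: sq_helper.
by rewrite embM -!embD r_eq.
Qed.

Lemma comm_sq (T : nzRingType) (P Q : T) : P * Q = Q * P ->
  (P + Q) * (P - Q) = P * P - Q * Q /\ (P - Q) * (P + Q) = P * P - Q * Q.
Proof.
move=> c; split.
  rewrite mulrDl !mulrBr c addrA; congr (_ - _); by rewrite subrK.
rewrite mulrBl !mulrDr c opprD addrA; congr (_ - _); by rewrite addrK.
Qed.

Lemma HIS : H * (I * S) = (I * S) * H.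
Proof. by rewrite mulrA -I_comm -mulrA HS_comm mulrA. Qed.

Lemma ISIS : (I * S) * (I * S) = - (S * S).
Proof. by rewrite -mulrA (mulrA S) -I_comm !mulrA II mulN1r mulNr. Qed.

Lemma u_ud : u * ud = 1.
Proof.
have [E _] := comm_sq HIS; rewrite /u /ud E ISIS opprK SS.
by rewrite addrC subrK.
Qed.

Lemma ud_u : ud * u = 1.
Proof.
have [_ E] := comm_sq HIS; rewrite /u /ud E ISIS opprK SS.
by rewrite addrC subrK.
Qed.

Lemma dag_u : dag u = ud.
Proof.
by rewrite /u /ud dagD dagM dagH dagS dagI mulrN I_comm.
Qed.

Lemma u_unit : u * dag u = 1.
Proof. by rewrite dag_u u_ud. Qed.

Lemma u_comm : u * ud = ud * u.
Proof. by rewrite u_ud ud_u. Qed.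

Lemma I4 : I ^+ 4 = 1.
Proof.
have -> : (4 = 2 * 2)%N by []. 
by rewrite exprM [I ^+ 2]expr2 II expr2 mulrNN mulr1.
Qed.

Lemma X_eq m : (u + ud) * (u - ud) ^+ (4 * m) = (H * S ^+ (4 * m)) *+ (2 * 2 ^ (4 * m)).
Proof.
have -> : u + ud = H *+ 2 by rewrite /u /ud addrACA subrr addr0 mulr2n.
have -> : u - ud = (I * S) *+ 2.
  by rewrite /u /ud opprB addrC addrA subrK mulr2n.
rewrite exprMn_n exprMn_comm; last exact: I_comm.
rewrite exprM I4 expr1n mul1r mulrnAl mulrnAr -mulrnA.
by rewrite [(2 ^ _ * 2)%N]mulnC.
Qed.

Lemma Xu_eq N : ((u + ud) * (u - ud) ^+ N) * u ^+ N.+1 = (u ^+ 2 + 1) * (u ^+ 2 - 1) ^+ N.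
Proof.
have cu : GRing.comm (u - ud) u.
  by rewrite /GRing.comm mulrBl mulrBr u_comm.
have cu' : GRing.comm u (u - ud) by [].
rewrite exprS -mulrA (mulrA _ u) -(commrX N cu') -mulrA (mulrA (u + ud)).
rewrite -exprMn_comm //.
by rewrite (mulrDl u ud u) (mulrBl u u ud) ud_u expr2.
Qed.

Lemma cnormMn (v : V) n : nm (v *+ n) = n%:R * nm v.
Proof.
rewrite -scaler_nat.
have -> : (n%:R : CC) = ((n%:R : RR)%:C)%C by rewrite rmorph_nat.
by rewrite cnormZR normr_nat.
Qed.

Lemma HS_bound m y :
  nm (rp y (H * S ^+ (4 * m))) * (2 ^ (4 * m))%:R <= ('C(4 * m, 2 * m))%:R * nm y.
Proof.
set N := (4 * m)%N.
have E1 : rp y ((u + ud) * (u - ud) ^+ N) = rp y (H * S ^+ N) *+ (2 * 2 ^ N).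
  by rewrite X_eq rpMn.
have E2 : nm (rp y ((u + ud) * (u - ud) ^+ N)) =
          nm (rp y ((u ^+ 2 + 1) * (u ^+ 2 - 1) ^+ N)).
  rewrite -(@rp_iso _ _ _ (u ^+ N.+1)); last exact: unitary_X u_unit.
  by rewrite -rpM Xu_eq.
have E3 := rp_sum y N.+2 (Dc N) (unitary_X 2 u_unit).
rewrite -Dc_poly in E3.
have E4 : (\sum_(k < N.+2) (`|Dc N k|)%:~R : RR) = (2 * 'C(N, 2 * m))%N%:R.
  have eN : N = (2 * m).*2 by rewrite /N -muln2; lia.
  rewrite -rmorph_sum /=.
  move: (Dc_abs_sum (2 * m)); rewrite -eN => ->.
  done.
rewrite E4 -E2 E1 cnormMn in E3.
have g := cnorm_ge0 B (rp y (H * S ^+ N)).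
have g2 := cnorm_ge0 B y.
rewrite !natrM in E3.
set c := ('C(N, 2 * m))%:R in E3 *.
set p := (2 ^ N)%:R in E3 *.
set z := nm _ in E3 g *.
have h2 : (0 : RR) < 2 by [].
rewrite -mulrA [_ * z]mulrC mulrA -mulrA in E3.
rewrite mulrC.
nra.
Qed.

Lemma witer_emb x m : emb (witer B x h m) = emb x * S ^+ (2 * m).
Proof.
elim: m => [|m IH]; first by rewrite muln0 expr0 mulr1.
rewrite /= embB -!embM IH mulnS addnC exprD expr2 SS -/H.
by rewrite !mulrBr !mulr1 !mulrA.
Qed.

Lemma witer_norm x (hx : x^† ** x = h) m :
  nm (witer B x h m) ^+ 2 * (2 ^ (4 * m))%:R <= ('C(4 * m, 2 * m))%:R.
Proof.
set w := witer B x h m.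
set e := w^† ** w.
have dagSX : forall k, dag (S ^+ k) = S ^+ k by move=> k; rewrite dagX dagS.
have Ee : emb e = H * S ^+ (4 * m).
  rewrite /e -embM -dag_emb /w witer_emb dagM dagSX dag_emb.
  rewrite mulrA -(mulrA _ (emb (x^†))) embM hx -/H.
  have cH : GRing.comm H (S ^+ (2 * m)) by apply: commrX; exact: HS_comm.
  rewrite -cH -mulrA -exprD.
  by have -> : (2 * m + 2 * m = 4 * m)%N by lia.
have e_sa : e^† = e by rewrite /e cstarM cstarK.
have n1 : nm w ^+ 2 = nm e by rewrite /e cnorm_cstar.
have n2 : nm e ^+ 2 = nm (rp e (H * S ^+ (4 * m))).
  rewrite -(cnorm_cstar B e) e_sa; congr nm.
  by apply: (@emb_inj _ B); rewrite -embMl -Ee embM.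
have hb := HS_bound m e.
rewrite -n2 n1 in hb *.
have g := cnorm_ge0 B e.
set c := ('C(4 * m, 2 * m))%:R in hb *.
set p := (2 ^ (4 * m))%:R in hb *.
have [e0|ep] := eqVneq (nm e) 0.
  rewrite e0 mul0r; exact: ler0n.
have ep' : 0 < nm e by rewrite lt_def ep g.
rewrite expr2 -mulrA in hb.
by rewrite [c * _]mulrC ler_pM2l in hb.
Qed.

End Core.

Section Span.
Variable V : lmodType CC.
Variable B : cstar_algebra V.
Local Notation "x ** y" := (cmul B x y) (at level 40, left associativity).
Local Notation "x ^†" := (cstar B x) (at level 2, format "x ^†").
Local Notation nm := (cnorm B).

Lemma clspan_sub (S : V -> Prop) v : S v -> clspan B S v.
Proof. by move=> Sv T _ _ ST; apply: ST. Qed.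

Lemma clspan_subspace (S : V -> Prop) : is_subspace (clspan B S).
Proof.
split; [|split].
- by move=> T [T0 _] _ _.
- move=> x y hx hy T hT cT ST; have [_ [hD _]] := hT; apply: hD; [exact: hx | exact: hy].
- move=> a x hx T hT cT ST; have [_ [_ hZ]] := hT; apply: hZ; exact: hx.
Qed.

Lemma clspan_closed (S : V -> Prop) : is_closed B (clspan B S).
Proof.
move=> u l hu cu T hT cT ST; apply: (cT u l) => // n; exact: hu.
Qed.

Lemma clspan_min (S T : V -> Prop) : is_subspace T -> is_closed B T ->
  (forall x, S x -> T x) -> forall v, clspan B S v -> T v.
Proof. by move=> hT cT ST v hv; apply: hv. Qed.

Lemma clspan_mono (S T : V -> Prop) : (forall x, S x -> T x) ->
  forall v, clspan B S v -> clspan B T v.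
Proof.
move=> ST; apply: clspan_min; [exact: clspan_subspace | exact: clspan_closed |].
by move=> x /ST; apply: clspan_sub.
Qed.

Lemma clspan_sub' (S : V -> Prop) : forall v, clspan B (clspan B S) v -> clspan B S v.
Proof.
apply: clspan_min; [exact: clspan_subspace | exact: clspan_closed | done].
Qed.

Lemma subspaceN (T : V -> Prop) x : is_subspace T -> T x -> T (- x).
Proof. by move=> [_ [_ hZ]] hx; rewrite -scaleN1r; apply: hZ. Qed.

Lemma subspaceB (T : V -> Prop) x y : is_subspace T -> T x -> T y -> T (x - y).
Proof.
move=> hT hx hy; have [_ [hD _]] := hT; apply: hD => //; exact: subspaceN.
Qed.

End Span.

Section CoreMem.
Variable V : lmodType CC.
Variable B : cstar_algebra V.
Local Notation "x ** y" := (cmul B x y) (at level 40, left associativity).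
Local Notation "x ^†" := (cstar B x) (at level 2, format "x ^†").
Local Notation nm := (cnorm B).

Lemma pow4_bound (m : nat) (z p c : RR) : 0 <= z -> 0 < p -> 0 <= c ->
  z ^+ 2 * p <= c -> c ^+ 2 * (m.*2.+1)%:R <= p ^+ 2 -> z ^+ 4 * (m.*2.+1)%:R <= 1.
Proof.
move=> z0 p0 c0 h1 h2.
have q0 : (0 : RR) < (m.*2.+1)%:R by rewrite ltr0n.
have h3 : (z ^+ 2 * p) ^+ 2 <= c ^+ 2.
  have a0 : 0 <= z ^+ 2 * p by apply: mulr_ge0 => //; [exact: sqr_ge0 | exact: ltW].
  set a := z ^+ 2 * p in a0 h1 *; rewrite !expr2; nra.
have h4 : z ^+ 4 * (m.*2.+1)%:R * p ^+ 2 <= p ^+ 2.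
  apply: le_trans h2.
  have -> : z ^+ 4 * (m.*2.+1)%:R * p ^+ 2 = (z ^+ 2 * p) ^+ 2 * (m.*2.+1)%:R.
    by rewrite exprMn -exprM; ring.
  by apply: ler_wpM2r => //; exact: ltW.
have p2 : 0 < p ^+ 2 by apply: exprn_gt0.
by rewrite -(ler_pM2r p2) mul1r.
Qed.

Lemma core_unit (I : V -> Prop) (x : V) : is_subspace I -> nm x <= 1 ->
  I (x^† ** x) -> clspan B (prodset B (setB (V:=V)) I) x.
Proof.
move=> hI hx hIx.
set h := x^† ** x.
have h_sa : h^† = h by rewrite /h cstarM cstarK.
have nh : nm h = nm x ^+ 2 by rewrite /h cnorm_cstar.
have nh1 : nm h <= 1.
  rewrite nh; have g := cnorm_ge0 B x; rewrite expr2; nra.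
set a := h ** h.
have a_sa : a^† = a by rewrite /a cstarM h_sa.
have a1 : nm a <= 1.
  apply: le_trans (cnormM B h h) _; have g := cnorm_ge0 B h; nra.
have [r [r_sa [r_c r_eq]]] := sqrt_exists a_sa a1.
have rh : h ** r = r ** h by apply: r_c; rewrite /a cmulA.
have bnd : forall m, nm (witer B x h m) ^+ 4 * (m.*2.+1)%:R <= 1.
  move=> m.
  have w1 := witer_norm h_sa r_sa rh r_eq (erefl h) m.
  have cb := central_bin (2 * m).
  have e2 : ((2 * m).*2 = 4 * m)%N by lia.
  apply: (@pow4_bound m _ (2 ^ (4 * m))%:R ('C(4 * m, 2 * m))%:R).
  - exact: cnorm_ge0.
  - by rewrite ltr0n expn_gt0.
  - exact: ler0n.
  - exact: w1.
  - rewrite -!natrX -natrM ler_nat.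
    have -> : ((2 ^ (4 * m)) ^ 2 = 16 ^ (2 * m))%N.
      by rewrite (_ : 16 = 2 ^ 4)%N // -!expnM; congr (2 ^ _)%N; lia.
    have -> : (m.*2.+1 = (2 * m).+1)%N by lia.
    by have -> : (4 * m = (2 * m).*2)%N by lia.
have mem : forall m, clspan B (prodset B (setB (V:=V)) I) (x - witer B x h m).
  elim=> [|m IH].
    rewrite /= subrr; by have [h0 _] := clspan_subspace B (prodset B (setB (V:=V)) I).
  rewrite [witer _ _ _ m.+1]/=.
  have -> : x - (witer B x h m - witer B x h m ** h ** h) =
    (x - witer B x h m) + witer B x h m ** h ** h by rewrite opprB addrA addrAC.
  have [_ [hD _]] := clspan_subspace B (prodset B (setB (V:=V)) I).
  apply: hD => //; apply: clspan_sub.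
  by exists (witer B x h m ** h), h.
apply: (clspan_closed (u := fun m => x - witer B x h m)) => //.
move=> e e0.
have e4 : 0 < e ^+ 4 by apply: exprn_gt0.
have b0 : 0 <= (e ^+ 4)^-1 by rewrite invr_ge0; exact: ltW.
have hb := archi_boundP b0.
exists (Num.bound (e ^+ 4)^-1) => n hn.
rewrite addrAC subrr add0r cnormN.
have := bnd n.
set z := nm _.
have z0 : 0 <= z by exact: cnorm_ge0.
move=> hz.
have hn' : ((Num.bound (e ^+ 4)^-1)%:R : RR) <= (n.*2.+1)%:R by rewrite ler_nat; lia.
have q : (e ^+ 4)^-1 < (n.*2.+1)%:R by exact: lt_le_trans hb hn'.
have q0 : (0 : RR) < (n.*2.+1)%:R by rewrite ltr0n.
have k : e ^+ 4 * (e ^+ 4)^-1 < e ^+ 4 * (n.*2.+1)%:R by rewrite ltr_pM2l.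
rewrite mulfV in k; last by rewrite gt_eqF.
have : z ^+ 4 * (n.*2.+1)%:R < e ^+ 4 * (n.*2.+1)%:R by exact: le_lt_trans hz k.
rewrite ltr_pM2r //.
rewrite ltr_pXn2r //; exact: ltW.
Qed.

End CoreMem.

Section Final.
Variable V : lmodType CC.
Variable B : cstar_algebra V.
Local Notation "x ** y" := (cmul B x y) (at level 40, left associativity).
Local Notation "x ^†" := (cstar B x) (at level 2, format "x ^†").
Local Notation nm := (cnorm B).

Lemma core_mem (I : V -> Prop) (x : V) : is_subspace I ->
  I (x^† ** x) -> clspan B (prodset B (setB (V:=V)) I) x.
Proof.
move=> hI hx.
have [T0 [_ TZ]] := clspan_subspace B (prodset B (setB (V:=V)) I).
have [e0|ep] := eqVneq (nm x) 0.
  by rewrite (cnorm_eq0 e0).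
have g := cnorm_ge0 B x.
have ep' : 0 < nm x by rewrite lt_def ep g.
set c : RR := (nm x)^-1.
have c0 : 0 < c by rewrite invr_gt0.
set x' := ((c%:C)%C : CC) *: x.
have n' : nm x' = 1 by rewrite /x' cnormZR gtr0_norm // mulVf.
have [hI0 [hID hIZ]] := hI.
have hI' : I (x'^† ** x').
  rewrite /x' cstarZ conjc_real cmulZl cmulZr.
  exact: (hIZ _ _ (hIZ _ _ hx)).
have hx' : nm x' <= 1 by rewrite n'.
have := core_unit hI hx' hI'.
have -> : x = ((nm x)%:C)%C *: x'.
  by rewrite /x' scalerA -rmorphM /= divff // scale1r.
move=> h; exact: TZ.
Qed.

End Final.

Section Op.
Variable V : lmodType CC.
Variable B : cstar_algebra V.

Definition opmul (x y : V) : V := cmul B y x.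

Lemma op_mulA x y z : opmul x (opmul y z) = opmul (opmul x y) z.
Proof. by rewrite /opmul cmulA. Qed.
Lemma op_mulDl x y z : opmul (x + y) z = opmul x z + opmul y z.
Proof. exact: cmulDr. Qed.
Lemma op_mulDr x y z : opmul x (y + z) = opmul x y + opmul x z.
Proof. exact: cmulDl. Qed.
Lemma op_mulZl (a : CC) x y : opmul (a *: x) y = a *: opmul x y.
Proof. exact: cmulZr. Qed.
Lemma op_mulZr (a : CC) x y : opmul x (a *: y) = a *: opmul x y.
Proof. exact: cmulZl. Qed.
Lemma op_starM x y : cstar B (opmul x y) = opmul (cstar B y) (cstar B x).
Proof. exact: cstarM. Qed.
Lemma op_normM x y : cnorm B (opmul x y) <= cnorm B x * cnorm B y.
Proof. by rewrite /opmul mulrC; apply: cnormM. Qed.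
Lemma op_norm_cstar x : cnorm B (opmul (cstar B x) x) = cnorm B x ^+ 2.
Proof. exact: cnorm_cstar'. Qed.

Definition opB : cstar_algebra V :=
  @CstarAlgebra V opmul (cstar B) (cnorm B) op_mulA op_mulDl op_mulDr op_mulZl op_mulZr
    (@cstarK _ B) (@cstarD _ B) (@cstarZ _ B) op_starM (@cnorm_eq0 _ B) (@cnormD _ B)
    (@cnormZ _ B) op_normM op_norm_cstar (@ccomplete _ B).

Lemma clspan_op (S : V -> Prop) v : clspan opB S v -> clspan B S v.
Proof. by []. Qed.

Lemma core_mem_op (I : V -> Prop) (x : V) : is_subspace I ->
  I (cmul B x (cstar B x)) -> clspan B (prodset B I (setB (V:=V))) x.
Proof.
move=> hI hx.
have := @core_mem V opB I x hI hx.
move/clspan_op; apply: clspan_mono.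
by move=> v [s [t [_ [It ->]]]]; exists t, s.
Qed.

End Op.

Section Main.
Variable V : lmodType CC.
Variable B : cstar_algebra V.
Local Notation "x ** y" := (cmul B x y) (at level 40, left associativity).
Local Notation "x ^†" := (cstar B x) (at level 2, format "x ^†").
Local Notation nm := (cnorm B).

Lemma normalizer_star (A : V -> Prop) n : normalizer B A n -> normalizer B A (n^†).
Proof. by move=> [h1 h2]; split=> a ha; rewrite cstarK; [apply: h2 | apply: h1]. Qed.

Lemma part2 (A : V -> Prop) (hA : closed_star_subalgebra B A) (hreg : regular_subalgebra B A)
  (I : V -> Prop) : closed_ideal_of B A I -> normalizer_invariant B A I -> B_invariant B I.
Proof.
move=> [IA [hI [cI [IL IR]]]] hinv.
have [[A0 [AD AZ]] [cA [AM AS]]] := hA.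
have [hspan _] := hreg.
have [I0 [ID IZ]] := hI.
move=> v; split.
- apply: clspan_min; [exact: clspan_subspace | exact: clspan_closed |].
  move=> _ [s [t [Is [_ ->]]]].
  pose P := fun t => clspan B (prodset B (setB (V:=V)) I) (s ** t).
  have [P0 [PD PZ]] := clspan_subspace B (prodset B (setB (V:=V)) I).
  apply: (clspan_min (S := normalizer B A) (T := P)); last exact: hspan.
  + split; [|split].
    * by rewrite /P cmul0r.
    * by move=> x y hx hy; rewrite /P cmulDr; apply: PD.
    * by move=> a x hx; rewrite /P cmulZr; apply: PZ.
  + move=> u l hu cu; apply: (clspan_closed (u := fun k => s ** u k)) => //.
    exact: cvg_mull.
  + move=> n hn; apply: core_mem => //.
    have -> : (s ** n)^† ** (s ** n) = n^† ** (s^† ** s) ** n.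
      by rewrite cstarM !cmulA.
    have := hinv (n^†) (normalizer_star hn) (s^† ** s).
    rewrite cstarK; apply.
    by apply: IL => //; apply: AS; apply: IA.
- apply: clspan_min; [exact: clspan_subspace | exact: clspan_closed |].
  move=> _ [t [s [_ [Is ->]]]].
  pose P := fun t => clspan B (prodset B I (setB (V:=V))) (t ** s).
  have [P0 [PD PZ]] := clspan_subspace B (prodset B I (setB (V:=V))).
  apply: (clspan_min (S := normalizer B A) (T := P)); last exact: hspan.
  + split; [|split].
    * by rewrite /P cmul0l.
    * by move=> x y hx hy; rewrite /P cmulDl; apply: PD.
    * by move=> a x hx; rewrite /P cmulZl; apply: PZ.
  + move=> u l hu cu; apply: (clspan_closed (u := fun k => u k ** s)) => //.
    exact: cvg_mulr.
  + move=> n hn; apply: core_mem_op => //.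
    have -> : (n ** s) ** (n ** s)^† = n ** (s ** s^†) ** n^†.
      by rewrite cstarM !cmulA.
    apply: hinv => //.
    by apply: IR => //; apply: AS; apply: IA.
Qed.

Lemma part1 (A : V -> Prop) (hA : closed_star_subalgebra B A) (J : V -> Prop) :
  closed_ideal B J -> normalizer_invariant B A (fun x => J x /\ A x).
Proof.
move=> [_ [_ [JL JR]]] n [hn1 hn2] s [Js As]; split.
  by apply: JR; apply: JL.
exact: hn2.
Qed.

Lemma part3 (A : V -> Prop) (hA : closed_star_subalgebra B A) (hreg : regular_subalgebra B A) :
  axiom_inv B A.
Proof.
move=> J hJ.
apply: (part2 hA hreg); last exact: part1.
have [[A0 [AD AZ]] [cA [AM AS]]] := hA.
have [[J0 [JD JZ]] [cJ [JL JR]]] := hJ.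
split; [by move=> x [] | split; [|split; [|split]]].
- split; [by [] | split].
  + by move=> x y [? ?] [? ?]; split; [apply: JD | apply: AD].
  + by move=> a x [? ?]; split; [apply: JZ | apply: AZ].
- move=> u l hu cu; split.
  + by apply: (cJ u) => // k; case: (hu k).
  + by apply: (cA u) => // k; case: (hu k).
- by move=> a i Aa [Ji Ai]; split; [apply: JL | apply: AM].
- by move=> a i Aa [Ji Ai]; split; [apply: JR | apply: AM].
Qed.

End Main.

Theorem proposition4p2 (V : lmodType CC) (B : cstar_algebra V) (A : V -> Prop)
  (hA : closed_star_subalgebra B A) (hreg : regular_subalgebra B A) :
  (forall J : V -> Prop, closed_ideal B J ->
      normalizer_invariant B A (fun x => J x /\ A x)) /\
  (forall I : V -> Prop, closed_ideal_of B A I ->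
      normalizer_invariant B A I -> B_invariant B I) /\
  axiom_inv B A.
Proof.
split; [|split].
- move=> J hJ; exact: part1.
- move=> I; exact: part2.
- exact: part3.
Qed.
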